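(* Let $\varphi$ be a formula in variables $x_1,\dots,x_n$ and let $p$ be a variable distinct from $x_1,\dots,x_n$. Define the single $p$-negation transform $\varphi^{p}$ of $\varphi$ to be the formula obtained by replacing each occurrence of each variable $x_i$ by $(x_i\Rightarrow p)$ and each occurrence of the constant $\mathbf{0}$ by $p$, leaving $\vee,\wedge,\Rightarrow$ and $\mathbf{1}$ unchanged. If $\varphi$ is a subset tautology, then $\varphi^{p}$ is a partition tautology. In particular, the weak law of excluded middle $(x\Rightarrow p)\vee((x\Rightarrow p)\Rightarrow p)$ is a partition tautology.
   Context: Formulas are built from variables and the constants $\mathbf{0},\mathbf{1}$ using the binary connectives $\vee,\wedge,\Rightarrow$. A formula is a subset tautology if, for every nonempty set $U$ and every assignment of subsets of $U$ to the variables, it evaluates to $U$ when $\vee,\wedge$ are interpreted as $\cup,\cap$, $S\Rightarrow T$ as $(U\setminus S)\cup T$, $\mathbf{0}$ as $\emptyset$ and $\mathbf{1}$ as $U$. A partition on a set $U$ is a set of non-empty, pairwise disjoint subsets of $U$ (called blocks) whose union is $U$. The discrete partition is $\mathbf{1}=\{\{u\}:u\in U\}$ and the indiscrete partition is $\mathbf{0}=\{U\}$. The join $\pi\vee\sigma$ is the partition whose blocks are the non-empty intersections $B\cap C$, $B\in\pi$, $C\in\sigma$. The meet $\pi\wedge\sigma$ is the partition whose blocks are the equivalence classes of the equivalence relation on $U$ generated by: $u\sim u'$ if $u,u'$ lie in a common block of $\pi$ or in a common block of $\sigma$. The partition implication $\sigma\Rightarrow\pi$ is the partition obtained from $\pi$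 by replacing every block $B\in\pi$ that is contained in some block of $\sigma$ by the singletons $\{u\}$, $u\in B$, and leaving every block of $\pi$ not contained in any block of $\sigma$ unchanged. A formula is a partition tautology if, for every set $U$ with $|U|\ge 2$ and every assignment of partitions on $U$ to the variables, it evaluates to $\mathbf{1}$ when $\vee,\wedge,\Rightarrow,\mathbf{0},\mathbf{1}$ are interpreted as the partition join, meet, implication, indiscrete and discrete partitions. *)

(* Defs.v *)
From Stdlib Require Import Relations.Relation_Operators.

Inductive form : Type :=
| Var : nat -> form
| FZero : form
| FOne : form
| FOr : form -> form -> form
| FAnd : form -> form -> form
| FImp : form -> form -> form.

Fixpoint occurs (p : nat) (f : form) : Prop :=
  match f with
  | Var i => i = p
  | FZero | FOne => False
  | FOr a b | FAnd a b | FImp a b => occurs p a \/ occurs p b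
  end.

Fixpoint pneg (p : nat) (f : form) : form :=
  match f with
  | Var i => FImp (Var i) (Var p)
  | FZero => Var p
  | FOne => FOne
  | FOr a b => FOr (pneg p a) (pneg p b)
  | FAnd a b => FAnd (pneg p a) (pneg p b)
  | FImp a b => FImp (pneg p a) (pneg p b)
  end.

Fixpoint seval {U : Type} (v : nat -> U -> Prop) (f : form) : U -> Prop :=
  match f with
  | Var i => v i
  | FZero => fun _ => False
  | FOne => fun _ => True
  | FOr a b => fun u => seval v a u \/ seval v b u
  | FAnd a b => fun u => seval v a u /\ seval v b u
  | FImp a b => fun u => ~ seval v a u \/ seval v b u
  end.

Definition subset_taut (f : form) : Prop :=
  forall (U : Type), inhabited U -> forall (v : nat -> U -> Prop),
    forall u : U, seval v f u.

Definition partn (U : Type) := (U -> Prop) -> Prop.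

Definition is_partition {U : Type} (P : partn U) : Prop :=
  (forall B, P B -> exists u, B u) /\
  (forall B C, P B -> P C -> (exists u, B u /\ C u) -> B = C) /\
  (forall u, exists B, P B /\ B u).

Definition discrete (U : Type) : partn U :=
  fun B => exists u, B = (fun w => w = u).

Definition indiscrete (U : Type) : partn U :=
  fun B => B = (fun _ => True).

Definition pjoin {U : Type} (pi sigma : partn U) : partn U :=
  fun D => exists B C, pi B /\ sigma C /\ (exists u, B u /\ C u) /\
           D = (fun u => B u /\ C u).

Definition same_block {U : Type} (pi sigma : partn U) (u u' : U) : Prop :=
  exists B, (pi B \/ sigma B) /\ B u /\ B u'.

Definition pmeet {U : Type} (pi sigma : partn U) : partn U :=
  fun D => exists u, D = (fun w => clos_refl_sym_trans U (same_block pi sigma) u w).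

Definition pimp {U : Type} (sigma pi : partn U) : partn U :=
  fun D =>
    (pi D /\ ~ (exists C, sigma C /\ forall u, D u -> C u)) \/
    (exists B u, pi B /\ (exists C, sigma C /\ forall w, B w -> C w) /\ B u /\
                 D = (fun w => w = u)).

Fixpoint peval {U : Type} (v : nat -> partn U) (f : form) : partn U :=
  match f with
  | Var i => v i
  | FZero => indiscrete U
  | FOne => discrete U
  | FOr a b => pjoin (peval v a) (peval v b)
  | FAnd a b => pmeet (peval v a) (peval v b)
  | FImp a b => pimp (peval v a) (peval v b)
  end.

Definition partition_taut (f : form) : Prop :=
  forall (U : Type), (exists a b : U, a <> b) ->
  forall (v : nat -> partn U), (forall i, is_partition (v i)) ->
    peval v f = discrete U.

(* Main.v *)
Require Import Defs.
From Stdlib Require Import Relations.Relation_Operators Classical FunctionalExtensionality PropExtensionality.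

Lemma set_ext {U : Type} (X Y : U -> Prop) : (forall w, X w <-> Y w) -> X = Y.
Proof. intro H; apply functional_extensionality; intro w; apply propositional_extensionality; auto. Qed.

Lemma partn_ext {U : Type} (A B : partn U) : (forall X, A X <-> B X) -> A = B.
Proof. intro H; apply functional_extensionality; intro w; apply propositional_extensionality; auto. Qed.

Definition Dp {U} (P : partn U) (S : U -> Prop) : partn U :=
  fun X => (exists u, S u /\ X = (fun w => w = u)) \/ (P X /\ exists u, X u /\ ~ S u).

Definition sat {U} (P : partn U) (S : U -> Prop) :=
  forall B u w, P B -> B u -> B w -> S u -> S w.

Lemma disj {U} (P : partn U) : is_partition P -> forall B C u, P B -> P C -> B u -> C u -> B = C.
Proof. intros [_ [H _]] B C u HB HC Bu Cu. apply H; eauto. Qed.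

Lemma Dp_cover {U} (P : partn U) S : is_partition P -> forall u, exists X, Dp P S X /\ X u.
Proof.
  intros HP u. destruct (classic (S u)) as [Su|nSu].
  - exists (fun w => w = u). split; auto. left; eauto.
  - destruct HP as [_ [_ Hc]]. destruct (Hc u) as [B [PB Bu]]. exists B. split; auto. right; eauto.
Qed.

Lemma sat_not {U} (P : partn U) S B u w : sat P S -> P B -> B u -> B w -> ~ S u -> ~ S w.
Proof. intros Hs PB Bu Bw nSu Sw. apply nSu. exact (Hs B w u PB Bw Bu Sw). Qed.

Definition Si {U} (s P : partn U) : U -> Prop :=
  fun u => exists B C, P B /\ B u /\ s C /\ (forall w, B w -> C w).

Lemma Si_sat {U} (s P : partn U) : is_partition P -> sat P (Si s P).
Proof.
  intros HP B u w PB Bu Bw [B' [C [PB' [B'u [sC HC]]]]].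
  assert (B = B') by exact (disj P HP B B' u PB PB' Bu B'u). subst B'.
  exists B, C; repeat split; auto.
Qed.

Lemma var_case {U} (s P : partn U) : is_partition P -> pimp s P = Dp P (Si s P).
Proof.
  intros HP. apply partn_ext. intro X. unfold pimp, Dp. split.
  - intros [[PX nC] | [B [u [PB [[C [sC BC]] [Bu EX]]]]]].
    + right. split; auto. destruct (proj1 HP X PX) as [x Xx].
      exists x. split; auto. intros [B' [C [PB' [B'x [sC HC]]]]].
      assert (X = B') by (eapply (disj P HP); eauto). subst B'. apply nC; eauto.
    + left. exists u. split; auto. exists B, C; auto.
  - intros [[u [[B [C [PB [Bu [sC HC]]]]] EX]] | [PX [x [Xx nS]]]].
    + right. exists B, u. repeat split; eauto.
    + left. split; auto. intros [C [sC HC]]. apply nS. exists X, C; auto.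
Qed.

Lemma zero_case {U} (P : partn U) : is_partition P -> P = Dp P (fun _ => False).
Proof.
  intros HP. apply partn_ext. intro X. unfold Dp. split.
  - intro PX. right. split; auto. destruct (proj1 HP X PX) as [x Xx]. eauto.
  - intros [[u [[] _]] | [PX _]]; auto.
Qed.

Lemma one_case {U} (P : partn U) : discrete U = Dp P (fun _ => True).
Proof.
  apply partn_ext. intro X. unfold Dp, discrete. split.
  - intros [u E]. left; eauto.
  - intros [[u [_ E]] | [_ [u [_ H]]]]; eauto. exfalso; auto.
Qed.

Lemma join_case {U} (P : partn U) S T : is_partition P -> sat P S -> sat P T ->
  pjoin (Dp P S) (Dp P T) = Dp P (fun u => S u \/ T u).
Proof.
  intros HP HS HT. apply partn_ext. intro X. unfold pjoin. split.
  - intros [B [C [DB [DC [[u [Bu Cu]] EX]]]]].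
    destruct DB as [[a [Sa EB]] | [PB [x [Bx nSx]]]].
    + subst B. subst u. left. exists a. split; auto. subst X. apply set_ext. intro w; split.
      * intros [? _]; auto.
      * intro; subst; auto.
    + destruct DC as [[a [Ta EC]] | [PC [y [Cy nTy]]]].
      * subst C. subst u. left. exists a. split; auto. subst X. apply set_ext. intro w; split.
        -- intros [_ ?]; auto.
        -- intro; subst; auto.
      * assert (B = C) by (eapply (disj P HP); eauto). subst C.
        right. assert (X = B) as -> . { subst X. apply set_ext. intro w; tauto. }
        split; auto. exists x. split; auto. intros [Sx|Tx]; auto.
        apply (sat_not P T B y x HT PB Cy Bx nTy Tx).
  - intros [[a [STa EX]] | [PX [x [Xx nST]]]].
    + subst X. destruct STa as [Sa|Ta].
      * destruct (Dp_cover P T HP a) as [C [DC Ca]].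
        exists (fun w => w = a), C. repeat split; auto. left; eauto. eauto.
        apply set_ext. intro w. split; [intro; subst; auto | tauto].
      * destruct (Dp_cover P S HP a) as [B [DB Ba]].
        exists B, (fun w => w = a). repeat split; auto. left; eauto. eauto.
        apply set_ext. intro w. split; [intro; subst; auto | tauto].
    + exists X, X. repeat split.
      * right. split; auto. exists x; split; auto.
      * right. split; auto. exists x; split; auto.
      * eauto.
      * apply set_ext. intro w; tauto.
Qed.
Lemma meet_rel {U} (P : partn U) S T : is_partition P -> sat P S -> sat P T ->
  forall u w, clos_refl_sym_trans U (same_block (Dp P S) (Dp P T)) u w <->
   (u = w \/ exists B, P B /\ B u /\ B w /\ ~ (S u /\ T u)).
Proof.
  intros HP HS HT u w. split.
  - intro H. induction H as [x y Hxy | x | x y _ IH | x y z _ IH1 _ IH2].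
    + destruct Hxy as [B [[DB|DB] [Bx By]]];
      destruct DB as [[a [_ EB]] | [PB [c [Bc nc]]]].
      * subst B. left; congruence.
      * right. exists B. repeat split; auto. intros [Sx _]. exact (sat_not P S B c x HS PB Bc Bx nc Sx).
      * subst B. left; congruence.
      * right. exists B. repeat split; auto. intros [_ Tx]. exact (sat_not P T B c x HT PB Bc Bx nc Tx).
    + left; auto.
    + destruct IH as [E | [B [PB [Bx [By n]]]]]; [left; auto | right].
      exists B. repeat split; auto. intros [Sy Ty]. apply n. split.
      exact (HS B y x PB By Bx Sy). exact (HT B y x PB By Bx Ty).
    + destruct IH1 as [E1 | [B [PB [Bx [By n]]]]]; [subst; auto|].
      destruct IH2 as [E2 | [C [PC [Cy [Cz n2]]]]]; [subst; right; exists B; auto; fail|].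
      assert (B = C) by (eapply (disj P HP); eauto). subst C.
      right; exists B; auto.
  - intros [E | [B [PB [Bu [Bw n]]]]].
    + subst; apply rst_refl.
    + apply rst_step. exists B. split; auto.
      destruct (classic (S u)) as [Su|nSu].
      * right. right. split; auto. exists u. split; auto.
      * left. right. split; auto. exists u; auto.
Qed.

Lemma meet_case {U} (P : partn U) S T : is_partition P -> sat P S -> sat P T ->
  pmeet (Dp P S) (Dp P T) = Dp P (fun u => S u /\ T u).
Proof.
  intros HP HS HT. apply partn_ext. intro X. unfold pmeet. split.
  - intros [u EX].
    assert (EX' : X = (fun w => u = w \/ exists B, P B /\ B u /\ B w /\ ~ (S u /\ T u))).
    { subst X. apply set_ext. intro w. apply meet_rel; auto. }
    clear EX. subst X.
    destruct (classic (S u /\ T u)) as [STu|nST].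
    + left. exists u. split; auto. apply set_ext. intro w. split.
      * intros [E | [B [_ [_ [_ n]]]]]; [auto | contradiction].
      * intro; auto.
    + destruct (proj2 (proj2 HP) u) as [B [PB Bu]].
      right. assert (E : (fun w => u = w \/ exists B, P B /\ B u /\ B w /\ ~ (S u /\ T u)) = B).
      { apply set_ext. intro w. split.
        - intros [E | [C [PC [Cu [Cw _]]]]]. subst; auto.
          rewrite <- (disj P HP C B u PC PB Cu Bu). auto.
        - intro Bw. right. exists B; auto. }
      rewrite E. split; auto. exists u; auto.
  - intros [[a [STa EX]] | [PX [x [Xx nST]]]].
    + exists a. subst X. apply set_ext. intro w. rewrite meet_rel by auto. split.
      * intro; subst; auto.
      * intros [E | [B [_ [_ [_ n]]]]]; [auto | contradiction].
    + exists x. apply set_ext. intro w. rewrite meet_rel by auto. split.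
      * intro Xw. right. exists X; auto.
      * intros [E | [C [PC [Cx [Cw _]]]]]. subst; auto.
        rewrite <- (disj P HP C X x PC PX Cx Xx). auto.
Qed.
Lemma imp_case {U} (P : partn U) S T : is_partition P -> sat P S -> sat P T ->
  pimp (Dp P S) (Dp P T) = Dp P (fun u => ~ S u \/ T u).
Proof.
  intros HP HS HT. apply partn_ext. intro X. unfold pimp. split.
  - intros [[DX nC] | [B [u [DB [[C [DC BC]] [Bu EX]]]]]].
    + destruct DX as [[a [Ta EX]] | [PX [x [Xx nTx]]]].
      * exfalso. apply nC. destruct (Dp_cover P S HP a) as [C [DC Ca]].
        exists C. split; auto. subst X. intros w ->. auto.
      * right. split; auto. exists x. split; auto.
        intros [nSx | Tx]; auto. apply nC. exists X. split; auto.
        right. split; auto. eauto.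
    + destruct (classic (~ S u \/ T u)) as [H|H].
      * left. eauto.
      * assert (Su : S u) by (apply NNPP; tauto).
        assert (nTu : ~ T u) by tauto.
        destruct DB as [[a [Ta EB]] | [PB [b [Bb nTb]]]].
        { subst B. subst. contradiction. }
        destruct DC as [[c [Sc EC]] | [PC [c [Cc nSc]]]].
        -- subst C. assert (EB : B = (fun w => w = u)).
           { apply set_ext. intro w. split; intro Hw.
             - rewrite (BC w Hw). symmetry. exact (BC u Bu).
             - subst; auto. }
           right. subst X. rewrite <- EB. split; auto. exists u. split; auto.
        -- exfalso. exact (sat_not P S C c u HS PC Cc (BC u Bu) nSc Su).
  - intros [[a [H EX]] | [PX [x [Xx H]]]].
    + subst X. right. destruct (classic (T a)) as [Ta|nTa].
      * destruct (Dp_cover P S HP a) as [C [DC Ca]].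
        exists (fun w => w = a), a. repeat split; auto.
        left; eauto. exists C. split; auto. intros w ->; auto.
      * assert (nSa : ~ S a) by tauto.
        destruct (proj2 (proj2 HP) a) as [B [PB Ba]].
        exists B, a. repeat split; auto.
        right; split; eauto. exists B. split; auto. right; split; eauto.
    + assert (Sx : S x) by (apply NNPP; tauto). assert (nTx : ~ T x) by tauto.
      destruct (classic (exists C, Dp P S C /\ forall u, X u -> C u)) as [[C [DC XC]]|nC].
      * right. exists X, x. repeat split; auto.
        -- right; split; eauto.
        -- exists C; auto.
        -- destruct DC as [[c [Sc EC]] | [PC [c [Cc nSc]]]].
           ++ subst C. apply set_ext. intro w. split; intro Hw.
              ** rewrite (XC w Hw). symmetry. exact (XC x Xx).
              ** subst; auto.
           ++ exfalso. exact (sat_not P S C c x HS PC Cc (XC x Xx) nSc Sx).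
      * left. split; auto. right; split; eauto.
Qed.

Lemma main_ind {U} (v : nat -> partn U) (p : nat) : (forall i, is_partition (v i)) ->
  forall phi, peval v (pneg p phi) = Dp (v p) (seval (fun i => Si (v i) (v p)) phi)
         /\ sat (v p) (seval (fun i => Si (v i) (v p)) phi).
Proof.
  intros Hv. assert (HP := Hv p).
  induction phi as [i | | | a [IHa Sa] b [IHb Sb] | a [IHa Sa] b [IHb Sb] | a [IHa Sa] b [IHb Sb]]; simpl.
  - split. apply var_case; auto. apply Si_sat; auto.
  - split. apply zero_case; auto. intros B u w _ _ _ [].
  - split. apply one_case. intros B u w _ _ _ _; exact I.
  - rewrite IHa, IHb. split. apply join_case; auto.
    intros B u w PB Bu Bw [H|H]; [left; exact (Sa B u w PB Bu Bw H) | right; exact (Sb B u w PB Bu Bw H)].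
  - rewrite IHa, IHb. split. apply meet_case; auto.
    intros B u w PB Bu Bw [H1 H2]. split; [exact (Sa B u w PB Bu Bw H1) | exact (Sb B u w PB Bu Bw H2)].
  - rewrite IHa, IHb. split. apply imp_case; auto.
    intros B u w PB Bu Bw [H|H]; [left; exact (sat_not _ _ B u w Sa PB Bu Bw H) | right; exact (Sb B u w PB Bu Bw H)].
Qed.

Theorem mainTheorem9 :
  (forall (phi : form) (p : nat), ~ occurs p phi ->
     subset_taut phi -> partition_taut (pneg p phi)) /\
  (forall x p : nat, x <> p ->
     partition_taut (FOr (FImp (Var x) (Var p))
                         (FImp (FImp (Var x) (Var p)) (Var p)))).
Proof.
  assert (H1 : forall (phi : form) (p : nat), ~ occurs p phi ->
     subset_taut phi -> partition_taut (pneg p phi)).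
  { intros phi p _ Ht U [a [b _]] v Hv.
    destruct (main_ind v p Hv phi) as [E _]. rewrite E.
    assert (ET : seval (fun i => Si (v i) (v p)) phi = (fun _ => True)).
    { apply set_ext. intro w. split; auto. }
    rewrite ET. symmetry. apply one_case. }
  split; auto.
  intros x p Hxp.
  change (partition_taut (pneg p (FOr (Var x) (FImp (Var x) FZero)))).
  apply H1.
  - simpl. intuition.
  - intros U _ v u. simpl. destruct (classic (v x u)); auto.
Qed.
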